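(* Fix a start node $s\in V$ and let $\ell_a,\ell_b$ be two labels with start node $s$ whose node sets do not contain $s$ (i.e. not fully extended), such that $v(\ell_a)=v(\ell_b)$ and $$\bar c(\ell_a)\le \bar c(\ell_b),\qquad t(\ell_a)\le t(\ell_b),\qquad \mathscr N(\ell_a)\subseteq \mathscr N(\ell_b).$$ Then $\ell_a$ dominates $\ell_b$ in the following sense: for every finite sequence of nodes $j_1,\dots,j_m$ with $j_m=s$ such that successively extending $\ell_b$ by $j_1,\dots,j_m$ is a valid sequence of extensions producing a fully-extended label $\ell_b^*$ with $t(\ell_b^* )\le q(\ell_b^* )$ (a length-feasible cycle), successively extending $\ell_a$ by $j_1,\dots,j_m$ is also a valid sequence of extensions, and the resulting fully-extended label $\ell_a^*$ satisfies $t(\ell_a^* )\le q(\ell_a^* )$ and $\bar c(\ell_a^* )\le \bar c(\ell_b^* )$.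
   Context: $G=(V,E)$ is an undirected graph with a critical time $q_i>0$ for each node $i\in V$, a travel time $t_{i,j}=t_{j,i}\ge 0$ for each edge $\{i,j\}\in E$, and a weight $\pi_i\in\mathbb R$ for each node (no sign restriction). Fix a start node $s\in V$. A label represents a path $P=(i_0,i_1,\dots,i_K)$ in $G$ with $i_0=s$ and is the tuple $\ell=(\mathscr N,v,\bar c,t,q)$ with $\mathscr N(\ell)=\{i_1,\dots,i_K\}$, $v(\ell)=i_K$, $\bar c(\ell)=1-\sum_{i\in\mathscr N(\ell)}\pi_i$, $t(\ell)=\sum_{k=1}^K t_{i_{k-1},i_k}$, $q(\ell)=\min_{k=0,\dots,K} q_{i_k}$. The initial label is $\ell_s=(\emptyset,s,1,0,q_s)$. A label $\ell$ may be extended by a node $j\in V\setminus\mathscr N(\ell)$ with $\{v(\ell),j\}\in E$, giving the label $\ell^+$ with $\mathscr N(\ell^+)=\mathscr N(\ell)\cup\{j\}$, $v(\ell^+)=j$, $\bar c(\ell^+)=\bar c(\ell)-\pi_j$, $t(\ell^+)=t(\ell)+t_{v(\ell),j}$, $q(\ell^+)=\min\{q(\ell),q_j\}$. A label $\ell\neq\ell_s$ is fully extended if $v(\ell)=s$; it then represents a cycle, whose reduced cost is $\bar c(\ell)$ and which is length-feasible iff $t(\ell)\le q(\ell)$. *)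

(* Defs.v *)
From mathcomp Require Import all_boot all_order all_algebra.
Set Implicit Arguments. Unset Strict Implicit. Unset Printing Implicit Defensive.
Import Order.TTheory GRing.Theory Num.Theory.
Local Open Scope ring_scope.

Record label (V : finType) (R : Type) := Label {
  lN : {set V}; lv : V; lc : R; lt : R; lq : R }.

Section Labels.
Variables (V : finType) (R : realFieldType).
Variables (E : rel V) (tt : V -> V -> R) (qc : V -> R) (pi : V -> R) (s : V).

Fixpoint travel (x : V) (P : seq V) : R :=
  match P with
  | [::] => 0
  | y :: P' => tt x y + travel y P'
  end.

(* The label of the path (s, i_1, ..., i_K), where P = [:: i_1; ...; i_K]. *)
Definition label_of_path (P : seq V) : label V R :=
  Label [set x in P] (last s P)
        (1 - \sum_(i in [set x in P]) pi i)
        (travel s P)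
        (foldr (fun i m => Num.min (qc i) m) (qc s) P).

Definition represents (l : label V R) : Prop :=
  exists P : seq V, path E s P /\ l = label_of_path P.

Definition extend (l : label V R) (j : V) : option (label V R) :=
  if (j \notin lN l) && E (lv l) j then
    Some (Label (j |: lN l) j (lc l - pi j) (lt l + tt (lv l) j)
                (Num.min (lq l) (qc j)))
  else None.

Definition extend_seq (l : label V R) (js : seq V) : option (label V R) :=
  foldl (fun ol j => obind (fun l' => extend l' j) ol) (Some l) js.

End Labels.

(* Main.v *)
Require Import Defs.
From mathcomp Require Import all_boot all_order all_algebra.
Import Order.TTheory GRing.Theory Num.Theory.
Local Open Scope ring_scope.

Section Aux.
Variables (V : finType) (R : realFieldType).
Variables (E : rel V) (tt : V -> V -> R) (qc : V -> R) (pi : V -> R).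

Definition inv (la lb : label V R) :=
  [/\ lN la \subset lN lb, lv la = lv lb, lc la <= lc lb, lt la <= lt lb
    & lq lb <= lq la].

Lemma foldl_none js :
  foldl (fun ol j => obind (fun l' => extend E tt qc pi l' j) ol) None js = None.
Proof. by elim: js. Qed.

Lemma step la lb j lb' : inv la lb -> extend E tt qc pi lb j = Some lb' ->
  exists la', extend E tt qc pi la j = Some la' /\ inv la' lb'.
Proof.
case=> sN ev ec et eq; rewrite /extend.
case: ifP => // /andP [jn ej] [<-].
have -> : (j \notin lN la) && E (lv la) j.
  rewrite ev ej andbT; apply: contra jn => ja; exact: (subsetP sN).
eexists; split; first reflexivity.
split => /=.
- exact: setUS.
- by [].
- by rewrite lerD2r.
- by rewrite ev lerD2r.
- rewrite le_min !ge_min lexx !orbT andbT.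
  by rewrite eq.
Qed.

Lemma seq_inv js la lb lbs : inv la lb -> extend_seq E tt qc pi lb js = Some lbs ->
  exists las, extend_seq E tt qc pi la js = Some las /\ inv las lbs.
Proof.
elim: js la lb => [|j js IH] la lb I /=.
  by rewrite /extend_seq /= => -[<-]; exists la.
rewrite /extend_seq /=.
case Eb: (extend E tt qc pi lb j) => [lb'|]; last by rewrite foldl_none.
have [la' [-> I']] := step _ _ _ _ I Eb.
exact: IH.
Qed.

Lemma fold_le (s : V) P :
  foldr (fun i m => Num.min (qc i) m) (qc s) P <= qc s /\
  forall x, x \in P -> foldr (fun i m => Num.min (qc i) m) (qc s) P <= qc x.
Proof.
elim: P => [|y P [IH1 IH2]] /=; first by split.
split; first by rewrite ge_min IH1 orbT.
move=> x; rewrite inE => /orP [/eqP ->|xP]; first by rewrite ge_min lexx.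
by rewrite ge_min IH2 ?orbT.
Qed.

Lemma fold_is (s : V) P :
  foldr (fun i m => Num.min (qc i) m) (qc s) P = qc s \/
  exists2 x, x \in P & foldr (fun i m => Num.min (qc i) m) (qc s) P = qc x.
Proof.
elim: P => [|y P IH] /=; first by left.
have [H|H] := lerP (qc y) (foldr (fun i m => Num.min (qc i) m) (qc s) P).
  by right; exists y; rewrite ?inE ?eqxx // min_l.
case: IH => [->|[x xP ->]]; first by left.
by right; exists x; rewrite // inE xP orbT.
Qed.

End Aux.

Theorem lemma1 (V : finType) (R : realFieldType)
  (E : rel V) (tt : V -> V -> R) (qc : V -> R) (pi : V -> R)
  (E_sym : symmetric E) (E_irr : irreflexive E)
  (tt_sym : forall i j, tt i j = tt j i)
  (tt_ge0 : forall i j, 0 <= tt i j)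
  (qc_gt0 : forall i, 0 < qc i)
  (s : V) (la lb : label V R) :
  represents E tt qc pi s la -> represents E tt qc pi s lb ->
  s \notin lN la -> s \notin lN lb ->
  lv la = lv lb ->
  lc la <= lc lb -> lt la <= lt lb -> lN la \subset lN lb ->
  forall (js : seq V) (lbs : label V R),
    js != [::] -> last s js = s ->
    extend_seq E tt qc pi lb js = Some lbs ->
    lt lbs <= lq lbs ->
    exists las : label V R,
      [/\ extend_seq E tt qc pi la js = Some las,
          lt las <= lq las &
          lc las <= lc lbs].
Proof.
move=> [Pa [_ ->]] [Pb [_ ->]] _ _ ev ec et sN js lbs _ _ Eb Hb.
have I : inv V R (label_of_path tt qc pi s Pa) (label_of_path tt qc pi s Pb).
  split => //=.
  have [Hs Hx] := fold_le _ _ qc s Pb.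
  case: (fold_is _ _ qc s Pa) => [->|[x xP ->]] //.
  apply: Hx; have := subsetP sN x; rewrite /= !inE; apply; by [].
have [las [Ea [_ _ ec' et' eq']]] := seq_inv _ _ _ _ _ _ _ _ _ _ I Eb.
exists las; split => //.
exact: le_trans et' (le_trans Hb eq').
Qed.
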